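(* In the setting below with $R_1=R$ and $R_2=R^c$, regard $G$ and $\Phi$ as fixed and parametrize by $b_R=b_{R_1}$ and $m_R=b_RG_R/G$ (where $G_R=G_{R_1}$). Then the log-likelihood ratio statistic $\Delta$ satisfies $\Delta=\frac{G}{\Phi}\,E(m_R,b_R)+c$, where $c$ is a constant not depending on $R$ and $$E(m_R,b_R)=m_R\,g_e\!\Big(G\tfrac{m_R}{b_R}\Big)-\tfrac{b_R}{G}B_e\!\Big(g_e\!\Big(G\tfrac{m_R}{b_R}\Big)\Big)+(1-m_R)\,g_e\!\Big(G\tfrac{1-m_R}{1-b_R}\Big)-\tfrac{1-b_R}{G}B_e\!\Big(g_e\!\Big(G\tfrac{1-m_R}{1-b_R}\Big)\Big).$$ That is, the discrepancy measure $d(m_R,b_R)$ (ignoring additive constants) satisfies $d(m_R,b_R)\frac{\Phi}{G}=E(m_R,b_R)$.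
   Context: A random variable $y$ belongs to $\mathrm{1EXP}(\eta,\phi,T,B_e,a)$ if it has density $C(y,\phi)\exp((\eta T(y)-B_e(\eta))/a(\phi))$ with $T$ measurable, $\phi>0$ known, $B_e$ strictly convex, and support independent of $\eta$; $g_e=(B_e')^{-1}$. For independent $y_i\sim\mathrm{1EXP}(\eta,\phi_i,T,B_e,a)$, $i\in S$, let $1/\phi^*=\sum_{i\in S}1/a(\phi_i)$ and $T^*(\mathbf{y})=\sum_{i\in S}(\phi^*/a(\phi_i))T(y_i)$. Setting: for $j=1,2$, $\mathbf{y}_{R_j}=(y_{R_ji}:i\in R_j)$ are mutually independent with $y_{R_ji}\sim\mathrm{1EXP}(\eta_{R_j},\phi_{R_ji},T,B_e,a)$. Let $\kappa(x,y)=(x g_e(x)-B_e(g_e(x)))/y$, $G_{R_j}=T^*(\mathbf{y}_{R_j})$, $1/\Phi_{R_j}=\sum_{i\in R_j}1/a(\phi_{R_ji})$, $1/\Phi=1/\Phi_{R_1}+1/\Phi_{R_2}$, $b_{R_1}=\frac{1/\Phi_{R_1}}{1/\Phi_{R_1}+1/\Phi_{R_2}}$, $G=b_{R_1}G_{R_1}+(1-b_{R_1})G_{R_2}$, and the log-likelihood ratio statistic for $H_0:\eta_{R_1}=\eta_{R_2}$ vs $H_1:\eta_{R_1}\ne\eta_{R_2}$ is $\Delta=\kappa(G_{R_1},\Phi_{R_1})+\kappa(G_{R_2},\Phi_{R_2})-\kappa(G,\Phi)$. *)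

(* Defs.v *)
From HB Require Import structures.
From mathcomp Require Import all_boot all_order all_algebra.
From mathcomp Require Import all_classical all_reals all_analysis.
Set Implicit Arguments. Unset Strict Implicit. Unset Printing Implicit Defensive.
Import Order.TTheory GRing.Theory Num.Theory.
Local Open Scope ring_scope.

Section Defs.
Variables (R : realType) (I : finType).

Definition strictly_convex (f : R -> R) : Prop :=
  forall x y t : R, x != y -> 0 < t -> t < 1 ->
    f (t * x + (1 - t) * y) < t * f x + (1 - t) * f y.

Definition kappa (ge Be : R -> R) (x y : R) : R :=
  (x * ge x - Be (ge x)) / y.

(* w i stands for a(phi_i) > 0 ; 1/Phi_S = sum_{i in S} 1/w i *)
Definition PhiS (w : I -> R) (S : {set I}) : R :=
  (\sum_(i in S) (w i)^-1)^-1.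

(* T^*(y_S) = sum_{i in S} (Phi_S / a(phi_i)) T(y_i), with t i = T(y_i) *)
Definition Tstar (w t : I -> R) (S : {set I}) : R :=
  \sum_(i in S) (PhiS w S / w i) * t i.

(* R_1 = S, R_2 = complement of S *)
Definition GR (w t : I -> R) (S : {set I}) : R := Tstar w t S.
Definition GRc (w t : I -> R) (S : {set I}) : R := Tstar w t (~: S).

Definition Phi_tot (w : I -> R) (S : {set I}) : R :=
  ((PhiS w S)^-1 + (PhiS w (~: S))^-1)^-1.

Definition bR (w : I -> R) (S : {set I}) : R :=
  (PhiS w S)^-1 / ((PhiS w S)^-1 + (PhiS w (~: S))^-1).

Definition G_tot (w t : I -> R) (S : {set I}) : R :=
  bR w S * GR w t S + (1 - bR w S) * GRc w t S.

Definition mR (w t : I -> R) (S : {set I}) : R :=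
  bR w S * GR w t S / G_tot w t S.

Definition Delta (ge Be : R -> R) (w t : I -> R) (S : {set I}) : R :=
  kappa ge Be (GR w t S) (PhiS w S) + kappa ge Be (GRc w t S) (PhiS w (~: S))
  - kappa ge Be (G_tot w t S) (Phi_tot w S).

Definition Efun (ge Be : R -> R) (G m b : R) : R :=
  m * ge (G * m / b) - b / G * Be (ge (G * m / b))
  + (1 - m) * ge (G * (1 - m) / (1 - b))
  - (1 - b) / G * Be (ge (G * (1 - m) / (1 - b))).

End Defs.

(* Main.v *)
Require Import Defs.
From HB Require Import structures.
From mathcomp Require Import all_boot all_order all_algebra.
From mathcomp Require Import all_classical all_reals all_analysis.
From mathcomp Require Import ring lra.
Import Order.TTheory GRing.Theory Num.Theory.
Local Open Scope ring_scope.

Lemma sum_split (R : realType) (I : finType) (F : I -> R) (S : {set I}) :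
  \sum_(i in [set: I]) F i = \sum_(i in S) F i + \sum_(i in ~: S) F i.
Proof. by rewrite (big_setID S) /= finset.setTI finset.setTD. Qed.

Lemma key (R : realType) (I : finType) (w t : I -> R) (S : {set I}) :
  Tstar w t S = (\sum_(i in S) (w i)^-1)^-1 * \sum_(i in S) t i / w i.
Proof.
rewrite /Tstar /PhiS big_distrr; apply eq_bigr => i _.
by rewrite -!mulrA [t i * _]mulrC.
Qed.

Lemma pos_sum (R : realType) (I : finType) (w : I -> R) (S : {set I}) :
  (forall i, 0 < w i) -> S != finset.set0 -> 0 < \sum_(i in S) (w i)^-1.
Proof.
move=> hw /set0Pn [x hx]; rewrite (bigD1 x) //=.
have h1 : 0 < (w x)^-1 by rewrite invr_gt0.
have h2 : 0 <= \sum_(i in S | i != x) (w i)^-1.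
  by apply: sumr_ge0 => i _; rewrite invr_ge0 ltW.
lra.
Qed.

Theorem theorem6p3 (R : realType) (I : finType) (Y : Type)
    (T : Y -> R) (a : R -> R) (y : I -> Y) (phi : I -> R) (Be ge : R -> R) :
  (forall i, 0 < phi i) ->
  (forall i, 0 < a (phi i)) ->
  strictly_convex Be ->
  (forall x : R, derivable Be x 1) ->
  (forall eta : R, ge (derive1 Be eta) = eta) ->
  Tstar (fun i => a (phi i)) (fun i => T (y i)) [set: I] != 0 ->
  exists c : R, forall S : {set I}, S != finset.set0 -> ~: S != finset.set0 ->
    let w := fun i => a (phi i) in
    let t := fun i => T (y i) in
    Delta ge Be w t S
    = G_tot w t S / Phi_tot w S
        * Efun ge Be (G_tot w t S) (mR w t S) (bR w S) + c.
Proof.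
move=> _ hw _ _ _ hT.
exists (- kappa ge Be (Tstar (fun i => a (phi i)) (fun i => T (y i)) [set: I])
            (PhiS (fun i => a (phi i)) [set: I])).
move=> S hS hSc w t.
have s1p := @pos_sum _ _ _ S hw hS.
have s2p := @pos_sum _ _ _ (~: S) hw hSc.
move: hT; rewrite -/w -/t key /PhiS !(@sum_split _ _ _ S).
rewrite /Delta /kappa /G_tot /Phi_tot /bR /mR /GR /GRc !key /PhiS.
set s1 := \sum_(i in S) _. set s2 := \sum_(i in ~: S) _.
set u1 := \sum_(i in S) _. set u2 := \sum_(i in ~: S) _.
move=> hT.
have s1n : s1 != 0 by rewrite gt_eqF.
have s2n : s2 != 0 by rewrite gt_eqF.
have s12n : s1 + s2 != 0 by rewrite gt_eqF // addr_gt0.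
have u12n : u1 + u2 != 0.
  by apply: contraNneq hT => ->; rewrite mulr0.
have hb : s1^-1^-1 / (s1^-1^-1 + s2^-1^-1) = s1 / (s1 + s2) by rewrite !invrK.
have hG : s1 / (s1 + s2) * (s1^-1 * u1) + (1 - s1 / (s1 + s2)) * (s2^-1 * u2)
          = (s1 + s2)^-1 * (u1 + u2) by field; rewrite ?s1n ?s2n ?s12n ?u12n.
have hPhi : (s1^-1^-1 + s2^-1^-1)^-1 = (s1 + s2)^-1 by rewrite !invrK.
rewrite hb hG hPhi.
have hm : s1 / (s1 + s2) * (s1^-1 * u1) / ((s1 + s2)^-1 * (u1 + u2))
          = u1 / (u1 + u2) by field; rewrite ?s1n ?s2n ?s12n ?u12n.
rewrite /bR /G_tot /GR /GRc !key /PhiS -/s1 -/s2 -/u1 -/u2 /bR /PhiS -/s1 -/s2 !hb hG hm /Efun.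
have a1 : (s1 + s2)^-1 * (u1 + u2) * (u1 / (u1 + u2)) / (s1 / (s1 + s2))
          = s1^-1 * u1 by field; rewrite ?s1n ?s2n ?s12n ?u12n.
have a2 : (s1 + s2)^-1 * (u1 + u2) * (1 - u1 / (u1 + u2)) / (1 - s1 / (s1 + s2))
          = s2^-1 * u2 by field; rewrite ?s1n ?s2n ?s12n ?u12n.
rewrite a1 a2.
move: (ge (s1^-1 * u1)) (ge (s2^-1 * u2)) (ge ((s1 + s2)^-1 * (u1 + u2))) => X1 X2 X3.
move: (Be X1) (Be X2) (Be X3) => B1 B2 B3.
move: s1n s2n s12n u12n; clearbody s1 s2 u1 u2 => s1n s2n s12n u12n.
congr (_ - _); rewrite !invrK.
have e1 : (s1 + s2)^-1 * (u1 + u2) * (s1 + s2) = u1 + u2 by rewrite mulrAC mulVf // mul1r.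
rewrite e1 mulrDl mulrBr mulrDr mulrBr !mulrA.
field; rewrite ?s1n ?s2n ?s12n ?u12n //.
Qed.
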